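(* Let $p>3$ be prime. For $t\in\mathbb{Z}/p\mathbb{Z}$ put $a_t(p)=-\sum_{x\bmod p}\left(\frac{x^3+t^2}{p}\right)$ and $A_2(p)=\sum_{t\bmod p}a_t(p)^2$. Then $A_2(p)=2p^2-2p$ if $p\equiv 1\pmod 3$, and $A_2(p)=0$ if $p\equiv 2 \pmod 3$.
   Context: $\left(\frac{\cdot}{p}\right)$ denotes the Legendre symbol (equal to $0$ at multiples of $p$). *)

(* Defs.v *)
From mathcomp Require Import all_boot all_order all_algebra.
Set Implicit Arguments. Unset Strict Implicit. Unset Printing Implicit Defensive.
Import GRing.Theory Num.Theory.
Local Open Scope ring_scope.

Definition legendre (p : nat) (a : int) : int :=
  if (p%:Z %| a)%Z then 0
  else if [exists x : 'I_p, ((x%:Z ^+ 2 - a) %% p%:Z)%Z == 0] then 1 else -1.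

Definition a_t (p : nat) (t : int) : int :=
  - \sum_(x < p) legendre p ((x%:Z) ^+ 3 + t ^+ 2).

Definition A2 (p : nat) : int := \sum_(t < p) (a_t p t%:Z) ^+ 2.

(* Main.v *)
Require Import Defs.
From mathcomp Require Import all_boot all_order all_algebra.
From mathcomp Require Import all_field.
From mathcomp Require Import zify ring lra.
Set Implicit Arguments. Unset Strict Implicit. Unset Printing Implicit Defensive.
Import GRing.Theory Num.Theory.
Local Open Scope ring_scope.

Section Gen.
Variable F : finFieldType.
Hypothesis two_nz : (2%:R : F) != 0.
Hypothesis q_gt3 : (3 < #|F|)%N.
Hypothesis m_even : ~~ odd (#|F|.-1).

Local Notation q := #|F|.
Local Notation m := (#|F|.-1).

Lemma fermat (y : F) : y != 0 -> y ^+ m = 1.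
Proof.
move=> y0; have := expf_card y.
have -> : q = m.+1 by rewrite prednK //; lia.
rewrite exprS => h; apply: (mulfI y0); by rewrite mulr1.
Qed.

Lemma prim_ex : exists g : F, m.-primitive_root g.
Proof.
have : has m.-primitive_root (enum (predC1 (0:F))).
  apply: cyclic.has_prim_root.
- lia.
- apply/allP => x; rewrite mem_enum /= => x0; rewrite unity_rootE fermat //.
- exact: enum_uniq.
- by rewrite -cardE cardC1.
by case/hasP=> g _ pg; exists g.
Qed.

Definition chi (x : F) : int :=
  if x == 0 then 0 else if [exists y, y ^+ 2 == x] then 1 else -1.

Lemma one_neq_m1 : (1 : F) != -1.
Proof. by apply: contra two_nz => /eqP h; rewrite mulr2n {2}h addrN. Qed.


Lemma chi_in x : chi x \in [:: 0; 1; -1].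
Proof. by rewrite /chi; case: (x == 0); last case: [exists _, _]. Qed.

Lemma intr3_inj (a b : int) : a \in [:: 0; 1; -1] -> b \in [:: 0; 1; -1] ->
  (a%:~R : F) = b%:~R -> a = b.
Proof.
have h1 := one_neq_m1; have h0 : (1 : F) != 0 := oner_neq0 _.
have h2 : (-1 : F) != 0 by rewrite oppr_eq0.
rewrite !inE => /or3P[]/eqP-> /or3P[]/eqP-> //= /eqP; rewrite ?rmorphN ?rmorph1 ?rmorph0;
  rewrite ?(eq_sym 0) ?(eq_sym (-1)) ?(negbTE h1) ?(negbTE h0) ?(negbTE h2) //;
  by rewrite eq_sym oppr_eq0 oner_eq0.
Qed.

Lemma chi_sqr x : x != 0 -> chi x ^+ 2 = 1.
Proof. by rewrite /chi => /negbTE ->; case: ifP. Qed.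

Lemma chi0 : chi 0 = 0.
Proof. by rewrite /chi eqxx. Qed.

Lemma chi1 : chi 1 = 1.
Proof. by rewrite /chi oner_eq0; case: existsP => // -[]; exists 1; rewrite expr1n. Qed.

Section Prim.
Variable g : F.
Hypothesis pg : m.-primitive_root g.
Local Notation h := (m./2).

Lemma m_h : (h * 2 = m)%N.
Proof. by have := odd_double_half m; rewrite (negbTE m_even) add0n -muln2. Qed.

Lemma h_gt0 : (0 < h)%N.
Proof. have := m_h; lia. Qed.

Lemma gh : g ^+ h = -1.
Proof.
have : (g ^+ h) ^+ 2 == 1 by rewrite -exprM m_h prim_expr_order.
rewrite sqrf_eq1 => /orP[|/eqP //].
rewrite -(prim_order_dvd pg) => /dvdn_leq; have := m_h; have := h_gt0; lia.
Qed.

Lemma chi_euler x : (chi x)%:~R = x ^+ h.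
Proof.
rewrite /chi; case: eqP => [->|/eqP x0]; first by rewrite expr0n eqn0Ngt h_gt0.
case: existsP => [[y /eqP yx]|ny]; first subst x.
  have y0 : y != 0 by apply: contra x0 => /eqP ->; rewrite expr0n.
  by rewrite -exprM mulnC m_h fermat.
have [i xi] := prim_rootP pg (fermat x0); subst x.
case oi : (odd i).
  by rewrite -exprM mulnC exprM gh -signr_odd oi expr1.
case: ny; exists (g ^+ i./2); rewrite -exprM.
by have := odd_double_half i; rewrite oi add0n -muln2 => ->.
Qed.

Lemma chiM x y : chi (x * y) = chi x * chi y.
Proof.
apply: intr3_inj; first exact: chi_in.
  by move: (chi_in x) (chi_in y); rewrite !inE => /or3P[]/eqP-> /or3P[]/eqP->.
by rewrite intrM !chi_euler exprMn.
Qed.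

Lemma chi_g : chi g = -1.
Proof.
apply: intr3_inj; [exact: chi_in| by [] |].
by rewrite chi_euler gh rmorphN rmorph1.
Qed.


Lemma sum_eq1 (y : F) : \sum_(t : F) ((t == y)%:R : int) = 1.
Proof.
rewrite (bigD1 y) //= eqxx big1 ?addr0 // => t /negbTE -> //.
Qed.

Lemma sum_one : \sum_(t : F) (1 : int) = q%:Z.
Proof. by rewrite (eq_bigl (fun t => t \in predT)) // sumr_const natz. Qed.

Lemma g_neq0 : g != 0.
Proof. by rewrite (prim_root_eq0 pg); lia. Qed.

Lemma sum_chi : \sum_x chi x = 0.
Proof.
have e : \sum_x chi x = - \sum_x chi x.
  rewrite {1}(reindex_inj (mulfI g_neq0)) /=.
  by rewrite -sumrN; apply: eq_bigr => x _; rewrite chiM chi_g mulN1r.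
by move: e; set s := (\sum_x chi x); lia.
Qed.

Lemma sum_chi_shift k : k != 0 -> \sum_x chi x * chi (x + k) = -1.
Proof.
move=> k0.
pose f x := if x == 0 then 1 else 1 + k / x.
have finj : injective f.
  move=> u v; rewrite /f; case: (eqVneq u 0) => [->|u0]; case: (eqVneq v 0) => [->|v0] //.
  - move/eqP; rewrite eq_sym -subr_eq0 addrAC subrr add0r mulf_eq0 invr_eq0 (negbTE k0) (negbTE v0) //.
  - move/eqP; rewrite -subr_eq0 addrAC subrr add0r mulf_eq0 invr_eq0 (negbTE k0) (negbTE u0) //.
  - by move/addrI/(mulfI k0)/invr_inj.
have e1 : \sum_x chi (f x) = 0 by rewrite -[LHS](reindex_inj finj (P:=xpredT) (F:=chi)) sum_chi.
have e2 : forall x, chi x * chi (x + k) = chi (f x) - (x == 0)%:R.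
  move=> x; rewrite /f; case: (eqVneq x 0) => [->|x0]; first by rewrite chi0 mul0r chi1 subrr.
  have -> : x + k = x * (1 + k / x) by rewrite mulrDr mulr1 mulrCA divff // mulr1.
  by rewrite subr0 chiM mulrA -expr2 chi_sqr // mul1r.
under eq_bigr do rewrite e2.
by rewrite sumrB e1 sum_eq1 sub0r.
Qed.


Lemma sum_chi2 a b : \sum_D chi (D + a) * chi (D + b) = if a == b then q%:Z - 1 else -1.
Proof.
have hinj : injective (fun D : F => D - a) by move=> u v /= /addIr.
rewrite (reindex_inj hinj) /=.
have e : forall D, chi (D - a + a) * chi (D - a + b) = chi D * chi (D + (b - a)).
  by move=> D; rewrite subrK; congr (_ * chi _); ring.
under eq_bigr do rewrite e.
case: eqVneq => [->|ab]; last by apply: sum_chi_shift; rewrite subr_eq0 eq_sym.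
rewrite subrr (eq_bigr (fun D => 1 - (D == 0)%:R)); first by rewrite sumrB sum_one sum_eq1.
move=> D _; case: eqVneq => [->|D0]; first by rewrite addr0 chi0 mul0r subrr.
by rewrite addr0 -expr2 chi_sqr // subr0.
Qed.

Definition S (D : F) : int := \sum_x chi (x ^+ 3 + D).

Lemma chi_cube c : c != 0 -> chi (c ^+ 3) = chi c.
Proof. by move=> c0; rewrite exprS chiM chiM -expr2 chi_sqr // mulr1. Qed.

Lemma S_scale c D : c != 0 -> S (c ^+ 3 * D) = chi c * S D.
Proof.
move=> c0; rewrite /S (reindex_inj (mulfI c0)) mulr_sumr; apply: eq_bigr => x _.
by rewrite exprMn -mulrDr chiM chi_cube.
Qed.

Lemma sumS2_chi : \sum_D chi D * S D ^+ 2 = 0.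
Proof.
have g3 : g ^+ 3 != 0 by rewrite expf_neq0 // g_neq0.
have e : \sum_D chi D * S D ^+ 2 = - \sum_D chi D * S D ^+ 2.
  rewrite {1}(reindex_inj (mulfI g3)) -sumrN; apply: eq_bigr => D _.
  rewrite S_scale ?g_neq0 // chiM chi_cube ?g_neq0 // chi_g; ring.
by move: e; set s := (\sum_D _); lia.
Qed.

Lemma sum_sq (f : F -> int) : \sum_t f (t ^+ 2) = \sum_D (1 + chi D) * f D.
Proof.
have cnt D : \sum_t ((t ^+ 2 == D)%:R : int) = 1 + chi D.
  rewrite /chi; case: (eqVneq D 0) => [->|D0].
    by under eq_bigr do rewrite expf_eq0 /=; rewrite sum_eq1 addr0.
  case: existsP => [[y /eqP yD]|ny]; last first.
    rewrite big1 ?subrr // => t _; case: eqP => // h; case: ny; exists t; exact/eqP.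
  subst D; have y0 : y != 0 by apply: contra D0 => /eqP ->; rewrite expr0n.
  have ey : y != - y.
    by rewrite -addr_eq0 -mulr2n -mulr_natl mulf_eq0 negb_or two_nz y0.
  rewrite (eq_bigr (fun t => (t == y)%:R + (t == - y)%:R)) => [|t _].
    by rewrite big_split /= !sum_eq1.
  rewrite eqf_sqr; case: (eqVneq t y) => [->|_] /=; last by rewrite add0r.
  by rewrite (negbTE ey) addr0.
transitivity (\sum_t \sum_D ((t ^+ 2 == D)%:R * f D)).
  apply: eq_bigr => t _; rewrite (bigD1 (t ^+ 2)) //= eqxx mul1r big1 ?addr0 //.
  by move=> D; rewrite eq_sym => /negbTE ->; rewrite mul0r.
rewrite exchange_big; apply: eq_bigr => D _; by rewrite -mulr_suml cnt.
Qed.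


Lemma sum_S2 : \sum_D S D ^+ 2 =
  q%:Z * \sum_(x : F) \sum_(y : F) ((x ^+ 3 == y ^+ 3)%:R : int) - q%:Z ^+ 2.
Proof.
transitivity (\sum_(x : F) \sum_(y : F) \sum_(D : F) chi (D + x ^+ 3) * chi (D + y ^+ 3)).
  rewrite /S; under eq_bigr do rewrite expr2 mulr_suml.
  under eq_bigr do under eq_bigr do rewrite mulr_sumr.
  rewrite exchange_big; apply: eq_bigr => x _; rewrite exchange_big.
  by apply: eq_bigr => y _; apply: eq_bigr => D _; rewrite !(addrC D).
under eq_bigr do under eq_bigr do rewrite sum_chi2.
rewrite mulr_sumr expr2 -sum_one mulr_sumr -sumrB; apply: eq_bigr => x _.
rewrite sum_one mulr_sumr mulr1 -[X in _ = _ - X]sum_one -sumrB.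
apply: eq_bigr => y _; case: eqP => _ /=; rewrite ?mulr1 ?mulr0; ring.
Qed.

Lemma N_eq : \sum_(x : F) \sum_(y : F) ((x ^+ 3 == y ^+ 3)%:R : int) =
  q%:Z * \sum_(u : F) ((u ^+ 3 == 1)%:R) + 1 - \sum_(u : F) ((u ^+ 3 == 1)%:R : int).
Proof.
set r := \sum_(u : F) ((u ^+ 3 == 1)%:R : int).
rewrite (eq_bigr (fun x => r * 1 + (x == 0)%:R * (1 - r))) => [|x _].
  by rewrite big_split /= -mulr_sumr -mulr_suml sum_one sum_eq1; ring.
case: (eqVneq x 0) => [->|x0].
  rewrite expr0n /= (eq_bigr (fun y => (y == 0)%:R)) ?sum_eq1 => [|y _]; first ring.
  by rewrite eq_sym expf_eq0.
have x3 : x ^+ 3 != 0 by rewrite expf_neq0.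
rewrite /= mul0r addr0 mulr1 (reindex_inj (mulfI x0)); apply: eq_bigr => u _.
by rewrite exprMn -{1}[x ^+ 3]mulr1 (inj_eq (mulfI x3)) eq_sym.
Qed.

Lemma r1 : ~~ (3 %| m)%N -> \sum_(u : F) ((u ^+ 3 == 1)%:R : int) = 1.
Proof.
move=> n3; rewrite (eq_bigr (fun u => (u == 1)%:R)) => [|u _]; first exact: sum_eq1.
suff -> : (u ^+ 3 == 1) = (u == 1) by [].
apply/eqP/eqP => [u3|->]; last by rewrite expr1n.
have u0 : u != 0 by apply/eqP => u0; move: u3; rewrite u0 expr0n => /eqP; rewrite eq_sym oner_eq0.
have [i ui] := prim_rootP pg (fermat u0); subst u.
move: u3; rewrite -exprM => /eqP; rewrite -(prim_order_dvd pg) mulnC Gauss_dvdr.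
  by rewrite (prim_order_dvd pg) => /eqP.
by rewrite coprime_sym prime_coprime.
Qed.

Lemma r3 : (3 %| m)%N -> \sum_(u : F) ((u ^+ 3 == 1)%:R : int) = 3.
Proof.
move=> d3; set w := g ^+ (m %/ 3); have pw : 3.-primitive_root w := dvdn_prim_root pg d3.
have w3 : w ^+ 3 = 1 := prim_expr_order pw.
have w1 : (w == 1) = false by rewrite -[w]expr1 -(prim_order_dvd pw).
have w21 : (w ^+ 2 == 1) = false by rewrite -(prim_order_dvd pw).
have w0 : w != 0 by apply/eqP => u0; move: w3; rewrite u0 expr0n => /eqP; rewrite eq_sym oner_eq0.
have ww2 : (w == w ^+ 2) = false.
  by apply/negbTE; apply: contraFneq w1 => e; apply/eqP/(mulfI w0); rewrite mulr1 -expr2 -e.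
have w23 : (w ^+ 2) ^+ 3 = 1 by rewrite -exprM mulnC exprM w3 expr1n.
rewrite (eq_bigr (fun u => (u == 1)%:R + (u == w)%:R + (u == w ^+ 2)%:R)) => [|u _].
  by rewrite !big_split /= !sum_eq1.
case: (boolP (u ^+ 3 == 1)) => [/eqP u3|n3]; last first.
  have nu z : z ^+ 3 = 1 -> (u == z) = false.
    by move=> z3; apply/negbTE; apply: contra n3 => /eqP ->; rewrite z3.
  by rewrite !nu ?expr1n.
have [[[|[|[|i]]] Hi] ->] := prim_rootP pw u3; last by [].
- by rewrite expr0 eqxx (eq_sym 1) w1 (eq_sym 1) w21.
- by rewrite expr1 eqxx w1 ww2.
- by rewrite eqxx w21 eq_sym ww2.
Qed.

Lemma total (r : int) : \sum_(u : F) ((u ^+ 3 == 1)%:R : int) = r ->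
  \sum_(t : F) S (t ^+ 2) ^+ 2 = q%:Z * (q%:Z * r + 1 - r) - q%:Z ^+ 2.
Proof.
move=> er; rewrite (sum_sq (fun D => S D ^+ 2)).
under eq_bigr do rewrite mulrDl mul1r.
by rewrite big_split /= sumS2_chi addr0 sum_S2 N_eq er.
Qed.

End Prim.
End Gen.

Section Fp.
Variable p : nat.
Hypothesis pr : prime p.
Hypothesis p3 : (3 < p)%N.
Local Notation F := ('F_p : finFieldType).

Lemma Fp_two_nz : (2%:R : F) != 0.
Proof.
rewrite -(dvdn_pcharf (pchar_Fp pr)); apply/negP => /dvdn_leq; lia.
Qed.

Lemma Fp_q_gt3 : (3 < #|F|)%N.
Proof. by rewrite card_Fp. Qed.

Lemma Fp_m_even : ~~ odd (#|F|.-1).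
Proof.
rewrite card_Fp //; case: (even_prime pr) => [p2|hop]; first by move: p3; rewrite p2.
by move: hop; rewrite -(prednK (prime_gt0 pr)) /=.
Qed.

Lemma val_lt (y : F) : (val y < p)%N.
Proof. exact: leq_trans (ltn_ord y) (eq_leq (Fp_cast pr)). Qed.

Lemma natr_val (y : F) : (val y)%:R = y.
Proof. by apply: val_inj; rewrite /= val_Fp_nat // modn_small // val_lt. Qed.

Lemma sumFp (G : F -> int) : \sum_(x < p) G (x%:R) = \sum_(y : F) G y.
Proof.
pose k (y : F) : 'I_p := Ordinal (val_lt y).
have hb : bijective (fun x : 'I_p => (x%:R : F)).
  exists k => [x|y]; last by rewrite natr_val.
  by apply: val_inj; rewrite /= val_Fp_nat // modn_small.
by rewrite (reindex _ (onW_bij _ hb)).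
Qed.

Lemma legendreE (z : int) : legendre p z = chi (z%:~R : F).
Proof.
rewrite /legendre /chi (dvdz_pcharf (pchar_Fp pr)); case: ifP => // _.
congr (if _ then _ else _); apply/existsP/existsP => [[x hx]|[y /eqP hy]].
  exists (x%:R); move: hx => /eqP/dvdz_mod0P; rewrite (dvdz_pcharf (pchar_Fp pr)).
  by rewrite rmorphB rmorphXn /= subr_eq0.
exists (Ordinal (val_lt y)); apply/eqP/dvdz_mod0P.
rewrite (dvdz_pcharf (pchar_Fp pr)) rmorphB rmorphXn /= subr_eq0 -hy.
by rewrite -[((val y)%:Z)%:~R]/((val y)%:R) natr_val.
Qed.

Lemma a_tE (t : int) : a_t p t = - S (t%:~R ^+ 2 : F).
Proof.
rewrite /a_t /S -(sumFp (fun y => chi (y ^+ 3 + (t%:~R ^+ 2 : F)))); congr (- _).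
by apply: eq_bigr => x _; rewrite legendreE rmorphD !rmorphXn.
Qed.

Lemma A2E : A2 p = \sum_(u : F) S (u ^+ 2) ^+ 2.
Proof.
rewrite /A2 -(sumFp (fun u => S (u ^+ 2) ^+ 2)); apply: eq_bigr => t _.
by rewrite a_tE sqrrN.
Qed.

End Fp.

Unset Implicit Arguments.
Theorem mainTheorem4 (p : nat) :
  prime p -> (3 < p)%N ->
  ((p %% 3 = 1)%N -> A2 p = 2 * (p%:Z) ^+ 2 - 2 * p%:Z) /\
  ((p %% 3 = 2)%N -> A2 p = 0).
Proof.
move=> pr p3.
have [g pg] := prim_ex (Fp_two_nz pr p3) (Fp_q_gt3 pr p3) (Fp_m_even pr p3).
have cF : #|'F_p| = p := card_Fp pr.
split => hp; rewrite (A2E pr).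
  rewrite (total (Fp_two_nz pr p3) (Fp_q_gt3 pr p3) (Fp_m_even pr p3) pg
     (r3 pg _)) cF; first ring.
  apply/dvdnP; exists (p %/ 3)%N; move: (divn_eq p 3); rewrite hp.
  set d := (p %/ 3)%N; lia.
rewrite (total (Fp_two_nz pr p3) (Fp_q_gt3 pr p3) (Fp_m_even pr p3) pg
   (r1 (Fp_two_nz pr p3) (Fp_q_gt3 pr p3) (Fp_m_even pr p3) pg _)) cF; first ring.
apply/negP => /dvdnP [k hk]; move: (divn_eq p 3); rewrite hp.
set d := (p %/ 3)%N; lia.
Qed.
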